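(* Let $T$ be a decomposition tree of a distance-hereditary graph $G$, and let $v$ be an internal node of $T$ labeled $\otimes$ with left child $v_l$ and right child $v_r$, such that property (P) holds at $v_l$ and at $v_r$. Then $\hat{min}(v)=\hat{min}(v_l)+\hat{min}(v_r)$.
   Context: All graphs are finite, simple, undirected. For a graph $H$ and $S\subseteq V(H)$, $N_H[S]$ is $S$ together with all vertices adjacent to a vertex of $S$, and $H[S]$ is the induced subgraph. Graphs carry a ''twin set'': a single-vertex graph on $x$ has twin set $\{x\}$. For vertex-disjoint graphs $G_l,G_r$ with twin sets $TS(G_l),TS(G_r)$: the true twin operation $G_l\otimes G_r$ has vertex set $V(G_l)\cup V(G_r)$, edge set $E(G_l)\cup E(G_r)\cup\{uw: u\in TS(G_l), w\in TS(G_r)\}$ and twin set $TS(G_l)\cup TS(G_r)$; the false twin operation $G_l\odot G_r$ has vertex set $V(G_l)\cup V(G_r)$, edge set $E(G_l)\cup E(G_r)$, twin set $TS(G_l)\cup TS(G_r)$; the attachment operation $G_l\oplus G_r$ has the same vertex and edge sets as $G_l\otimes G_r$ and twin set $TS(G_l)$. A decomposition tree $T$ of $G$ is a rooted binary tree whose leaves are in bijection with $V(G)$, each internal node having a left and a right child and a label in $\{\otimes,\odot,\oplus\}$; for each node $v$ define $\hat G(v)$ and $\hat{TS}(v)$ recursively: for a leaf $x$, the single-vertex graph on $x$ with twin set $\{x\}$; for an internal node $v$ with label $\circ$ and children $v_l,v_r$, $\hat G(v)=\hat G(v_l)\circ\hat G(v_r)$ with the corresponding twin set; one requires $\hat G(\text{root})=G$.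 Then $\hat G(v)$ is the subgraph of $G$ induced by the set $\hat V(v)$ of leaves below $v$. For a node $u$ and $0\le k\le|\hat{TS}(u)|$, call $S\subseteq\hat V(u)$ $k$-feasible if $\hat V(u)\setminus\hat{TS}(u)\subseteq N_{\hat G(u)}[S]$ and there is $X\subseteq S\cap\hat{TS}(u)$ with $|X|=k$ such that $\hat G(u)[S\setminus X]$ has a perfect matching. $\hat\gamma_k(u)$ is the minimum size of a $k$-feasible set. $\hat{min}(u)=\min\{\hat\gamma_k(u):0\le k\le|\hat{TS}(u)|\}$, and $\hat\alpha(u)$, $\hat\beta(u)$ are the smallest and the largest $k$ with $\hat\gamma_k(u)=\hat{min}(u)$. Property (P) holds at $u$ if for every $0\le k\le|\hat{TS}(u)|$: $\hat\gamma_k(u)=\hat{min}(u)+\hat\alpha(u)-k$ when $k\le\hat\alpha(u)$; $\hat\gamma_k(u)=\hat{min}(u)+k-\hat\beta(u)$ when $k\ge\hat\beta(u)$; $\hat\gamma_k(u)=\hat{min}(u)$ when $\hat\alpha(u)<k<\hat\beta(u)$ and $k-\hat\alpha(u)$ is even; and $\hat\gamma_k(u)=\hat{min}(u)+1$ otherwise. *)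

(* Defs.v *)
From mathcomp Require Import all_boot.
Set Implicit Arguments. Unset Strict Implicit. Unset Printing Implicit Defensive.

(* Labels of internal nodes: true twin (otimes), false twin (odot), attachment (oplus). *)
Inductive dlabel := LTrue | LFalse | LAttach.

Definition dlabel_eqb (a b : dlabel) : bool :=
  match a, b with
  | LTrue, LTrue | LFalse, LFalse | LAttach, LAttach => true
  | _, _ => false end.

Inductive dtree (V : Type) :=
| DLeaf of V
| DNode of dlabel & dtree V & dtree V.
Arguments DLeaf {V}.
Arguments DNode {V}.

Section Tree.
Variable V : finType.

Fixpoint leaves (t : dtree V) : seq V :=
  match t with DLeaf x => [:: x] | DNode _ l r => leaves l ++ leaves r end.

Definition hV (t : dtree V) : {set V} := [set x | x \in leaves t].

Fixpoint hTS (t : dtree V) : {set V} :=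
  match t with
  | DLeaf x => [set x]
  | DNode LTrue l r => hTS l :|: hTS r
  | DNode LFalse l r => hTS l :|: hTS r
  | DNode LAttach l r => hTS l
  end.

Fixpoint hE (t : dtree V) : rel V :=
  match t with
  | DLeaf _ => fun _ _ => false
  | DNode lab l r => fun x y =>
      [|| hE l x y, hE r x y |
        (~~ dlabel_eqb lab LFalse) &&
        (((x \in hTS l) && (y \in hTS r)) || ((y \in hTS l) && (x \in hTS r)))]
  end.

(* s is a node of t (the subtree rooted at that node) *)
Fixpoint subtree (s t : dtree V) : Prop :=
  s = t \/ match t with DLeaf _ => False | DNode _ l r => subtree s l \/ subtree s r end.

Definition decomp_tree (G : rel V) (t : dtree V) : Prop :=
  uniq (leaves t) /\ (forall x : V, x \in leaves t) /\ (forall x y : V, G x y = hE t x y).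

(* distance-hereditary: in every induced subgraph in which x,y are connected,
   the distance between x and y equals their distance in G. *)
Definition walk_le (e : rel V) (x y : V) (n : nat) : Prop :=
  exists p : seq V, size p <= n /\ path e x p /\ last x p = y.

Definition distance_hereditary (G : rel V) : Prop :=
  forall (S : {set V}) (x y : V), x \in S -> y \in S ->
    let GS := fun a b => G a b && (a \in S) && (b \in S) in
    (exists n, walk_le GS x y n) ->
    forall n, walk_le G x y n -> walk_le GS x y n.

(* e has a perfect matching on vertex set W: a set M of edges (2-sets {x,y}
   with e x y, inside W) covering each vertex of W exactly once. *)
Definition has_pm (e : rel V) (W : {set V}) : bool :=
  [exists M : {set {set V}},
    [forall m in M, (m \subset W) &&
       [exists x, exists y, [&& x != y, e x y & m == [set x; y]]]] &&
    [forall x in W, #|[set m in M | x \in m]| == 1]].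

Definition cnbh (u : dtree V) (S : {set V}) : {set V} :=
  [set x in hV u | (x \in S) || [exists s in S, hE u x s]].

Definition kfeasible (u : dtree V) (k : nat) (S : {set V}) : bool :=
  [&& S \subset hV u,
      (hV u :\: hTS u) \subset cnbh u S &
      [exists X : {set V}, [&& X \subset S :&: hTS u, #|X| == k &
                               has_pm (hE u) (S :\: X)]]].

(* \hat gamma_k(u): minimum size of a k-feasible set (the default #|V|.+1 is
   never used for 0 <= k <= |TS(u)|, where k-feasible sets exist). *)
Definition hgamma (u : dtree V) (k : nat) : nat :=
  \big[minn/#|V|.+1]_(S : {set V} | kfeasible u k S) #|S|.

Definition hmin (u : dtree V) : nat :=
  \big[minn/#|V|.+1]_(k < #|hTS u|.+1) hgamma u k.

Definition halpha (u : dtree V) : nat :=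
  \big[minn/#|hTS u|]_(k < #|hTS u|.+1 | hgamma u k == hmin u) (k : nat).

Definition hbeta (u : dtree V) : nat :=
  \max_(k < #|hTS u|.+1 | hgamma u k == hmin u) (k : nat).

Definition propP (u : dtree V) : Prop :=
  forall k, k <= #|hTS u| ->
    (k <= halpha u -> hgamma u k = hmin u + halpha u - k) /\
    (hbeta u <= k -> hgamma u k = hmin u + k - hbeta u) /\
    (halpha u < k < hbeta u -> ~~ odd (k - halpha u) -> hgamma u k = hmin u) /\
    (halpha u < k < hbeta u -> odd (k - halpha u) -> hgamma u k = (hmin u).+1).

End Tree.

(* Main.v *)
Require Import Defs.
From mathcomp Require Import all_boot.
Set Implicit Arguments. Unset Strict Implicit. Unset Printing Implicit Defensive.

Section Aux.
Variable V : finType.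
Implicit Types (t l r u : dtree V).

Lemma hV_node lab l r : hV (DNode lab l r) = hV l :|: hV r.
Proof. by apply/setP => x; rewrite !inE mem_cat. Qed.

Lemma hV_leaf (x : V) : hV (DLeaf x) = [set x].
Proof. by apply/setP => y; rewrite !inE. Qed.

Lemma hTS_sub t : hTS t \subset hV t.
Proof.
elim: t => [x|lab l IHl r IHr]; first by rewrite hV_leaf.
rewrite hV_node; case: lab => /=; rewrite ?setUSS //.
exact: subset_trans IHl (subsetUl _ _).
Qed.

Lemma hE_hV t x y : hE t x y -> (x \in hV t) && (y \in hV t).
Proof.
elim: t => [z|lab l IHl r IHr] //=.
have Hl := subsetP (hTS_sub l); have Hr := subsetP (hTS_sub r).
rewrite hV_node !in_setU => /or3P [/IHl/andP[-> ->] //|/IHr/andP[-> ->]|/andP[_ /orP[] /andP[hx hy]]].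
- by rewrite !orbT.
- by rewrite (Hl _ hx) (Hr _ hy) orbT.
- by rewrite (Hl _ hx) (Hr _ hy) orbT.
Qed.

Lemma hE_sym t x y : hE t x y = hE t y x.
Proof.
elim: t => [z|lab l IHl r IHr] //=.
rewrite IHl IHr; congr [|| _, _ | _]; congr (_ && _); by rewrite orbC.
Qed.

Lemma hTS_n0 t : exists x, x \in hTS t.
Proof.
elim: t => [x|[] l [x Hx] r _] /=; first by exists x; rewrite inE.
all: by exists x; rewrite ?inE Hx.
Qed.

Lemma noniso t w : w \in hV t -> w \notin hTS t -> exists2 y, y != w & hE t w y.
Proof.
elim: t => [x|lab l IHl r IHr]; first by rewrite hV_leaf /= => ->.
rewrite hV_node in_setU => /orP[wl|wr]; case: lab => /=; rewrite ?inE ?negb_or.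
- by case/andP => /(IHl wl) [y yw Ey] _; exists y; rewrite // Ey.
- by case/andP => /(IHl wl) [y yw Ey] _; exists y; rewrite // Ey.
- by move=> /(IHl wl) [y yw Ey]; exists y; rewrite // Ey.
- by case/andP => _ /(IHr wr) [y yw Ey]; exists y; rewrite // Ey orbT.
- by case/andP => _ /(IHr wr) [y yw Ey]; exists y; rewrite // Ey orbT.
- move=> wnl; case: (boolP (w \in hTS r)) => wtr.
    have [z zl] := hTS_n0 l.
    exists z; first by apply: contraNneq wnl => <-.
    by rewrite /= zl !orbT.
  by have [y yw Ey] := IHr wr wtr; exists y; rewrite // Ey orbT.
Qed.

Lemma in_cnbh t S x :
  (x \in cnbh t S) = (x \in hV t) && ((x \in S) || [exists s in S, hE t x s]).
Proof. rewrite /cnbh; apply: in_set. Qed.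

Definition ismatch t (M : {set {set V}}) : bool :=
  [forall m in M, (m \subset hV t) &&
     [exists x, exists y, [&& x != y, hE t x y & m == [set x; y]]]] &&
  [forall x, #|[set m in M | x \in m]| <= 1].

Lemma exists_feas0 t : exists S, kfeasible t 0 S.
Proof.
have m0 : ismatch t set0.
  apply/andP; split; first by apply/forall_inP => x; rewrite inE.
  apply/forallP => x.
  rewrite (_ : [set m in (set0 : {set {set V}}) | x \in m] = set0) ?cards0 //.
  by apply/setP => m; rewrite !inE.
case: (@arg_maxnP _ _ (ismatch t) (fun M => #|M|) m0) => M HM Hmax.
case/andP: HM => /forall_inP HM1 /forallP HM2.
pose S := \bigcup_(m in M) m.
exists S; apply/and3P; split.
- apply/bigcupsP => m mM; by case/andP: (HM1 m mM).
- apply/subsetP => w; rewrite in_setD => /andP[wnTS wV].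
  rewrite /cnbh inE wV /=.
  case: (boolP (w \in S)) => // wS /=.
  have [y yw Ey] := noniso wV wnTS.
  apply/exists_inP; exists y => //.
  apply: contraT => yS.
  pose M' := [set w; y] |: M.
  have nM : [set w; y] \notin M.
    apply: contra wS => H; apply/bigcupP; exists [set w; y] => //; by rewrite !inE eqxx.
  have HM' : ismatch t M'.
    apply/andP; split.
      apply/forall_inP => m; rewrite !inE => /orP[/eqP->|/HM1 //].
      have /andP[wV' yV'] := hE_hV Ey.
      apply/andP; split.
        by apply/subsetP => z; rewrite in_set2 => /orP[]/eqP->.
      apply/existsP; exists w; apply/existsP; exists y.
      by rewrite eq_sym yw Ey eqxx.
    apply/forallP => x.
    have -> : [set m in M' | x \in m] =
              [set m in [set [set w; y]] | x \in m] :|: [set m in M | x \in m].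
      by apply/setP => m; rewrite !inE andb_orl.
    case: (boolP (x \in [set w; y])) => xwy.
      have -> : [set m in M | x \in m] = set0.
        apply/setP => m; rewrite !inE; apply/negbTE/andP => [[mM xm]].
        have xS : x \in S by apply/bigcupP; exists m.
        by move: xwy; rewrite !inE => /orP[]/eqP xe; subst x; [rewrite xS in wS | rewrite xS in yS].
      rewrite setU0; apply: leq_trans (subset_leq_card (_ : _ \subset [set [set w; y]])) _.
        by apply/subsetP => m; rewrite !inE => /andP[].
      by rewrite cards1.
    have -> : [set m in [set [set w; y]] | x \in m] = set0.
      by apply/setP => m; rewrite !inE; apply/negbTE/andP => [[/eqP-> xm]]; rewrite xm in xwy.
    by rewrite set0U.
  have := Hmax M' HM'; rewrite /M' cardsU1 nM /=.
  by rewrite ltnn.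
- apply/existsP; exists set0; rewrite sub0set cards0 setD0 /=.
  apply/existsP; exists M; apply/andP; split.
    apply/forall_inP => m mM; case/andP: (HM1 m mM) => _ ->.
    by rewrite andbT; apply: bigcup_sup.
  apply/forall_inP => x /bigcupP [m mM xm].
  rewrite eqn_leq HM2 /=; apply/card_gt0P; exists m; by rewrite inE mM.
Qed.

Lemma subtree_uniq s t : subtree s t -> uniq (leaves t) -> uniq (leaves s).
Proof.
elim: t => [x|lab l IHl r IHr] /= [-> //|]; first by [].
by rewrite cat_uniq => [[/IHl H|/IHr H]] /and3P[ul _ ur]; auto.
Qed.

Lemma kfeas_le t k S : kfeasible t k S -> k <= #|hTS t|.
Proof.
case/and3P => _ _ /existsP [X /and3P [XS /eqP <- _]].
exact: subset_leq_card (subset_trans XS (subsetIr _ _)).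
Qed.

Lemma bigmin_le (I : finType) (P : pred I) (F : I -> nat) d i :
  P i -> \big[minn/d]_(j | P j) F j <= F i.
Proof.
move=> Pi; have : i \in index_enum I by rewrite mem_index_enum.
elim: (index_enum I) => [//|a s IH]; rewrite inE big_cons.
case/orP => [/eqP <-|/IH H]; first by rewrite Pi geq_minl.
by case: (P a) => //; rewrite geq_min H orbT.
Qed.

Lemma bigmin_ge (I : finType) (P : pred I) (F : I -> nat) d c :
  c <= d -> (forall i, P i -> c <= F i) -> c <= \big[minn/d]_(j | P j) F j.
Proof. by move=> cd cF; elim/big_ind: _ => // x y cx cy; rewrite leq_min cx cy. Qed.

Lemma bigmin_attain (I : finType) (P : pred I) (F : I -> nat) d :
  \big[minn/d]_(j | P j) F j = d \/ exists2 i, P i & \big[minn/d]_(j | P j) F j = F i.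
Proof.
elim/big_ind: _; [by left | | by move=> i Pi; right; exists i].
by move=> x y Kx Ky; rewrite /minn; case: ifP.
Qed.

Lemma hmin_le t k S : kfeasible t k S -> hmin t <= #|S|.
Proof.
move=> H; have kl : k < #|hTS t|.+1 by rewrite ltnS (kfeas_le H).
rewrite /hmin; apply: leq_trans (@bigmin_le _ xpredT (fun k : 'I_(#|hTS t|.+1) => hgamma t k) _ (Ordinal kl) isT) _.
exact: (@bigmin_le _ (fun S => kfeasible t k S) (fun S => #|S|)).
Qed.

Lemma hmin_attain t : exists k S, kfeasible t k S /\ #|S| = hmin t.
Proof.
have [S0 HS0] := exists_feas0 t.
have lt : hmin t < #|V|.+1.
  by apply: leq_ltn_trans (hmin_le HS0) _; rewrite ltnS max_card.
have [E|[k _ E]] := @bigmin_attain _ xpredT (fun k : 'I_(#|hTS t|.+1) => hgamma t k) #|V|.+1.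
  by move: lt; rewrite /hmin E ltnn.
have lt2 : hgamma t k < #|V|.+1 by rewrite -E.
have [E2|[S HS E2]] := @bigmin_attain _ (fun S => kfeasible t k S) (fun S => #|S|) #|V|.+1.
  by move: lt2; rewrite /hgamma E2 ltnn.
by exists k, S; split => //; rewrite /hmin E /hgamma E2.
Qed.

Lemma pm_union (e1 e2 e : rel V) (A B : {set V}) :
  (forall x y, e1 x y -> e x y) -> (forall x y, e2 x y -> e x y) ->
  (forall x, x \in A -> x \in B -> False) ->
  has_pm e1 A -> has_pm e2 B -> has_pm e (A :|: B).
Proof.
move=> h1 h2 dis /existsP[M1 /andP[/forall_inP H11 /forall_inP H12]].
move=> /existsP[M2 /andP[/forall_inP H21 /forall_inP H22]].
apply/existsP; exists (M1 :|: M2); apply/andP; split.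
- apply/forall_inP => m; rewrite inE => /orP[mM|mM].
  + have /andP[mA /existsP[x /existsP[y /and3P[xy exy mxy]]]] := H11 m mM.
    rewrite (subset_trans mA (subsetUl _ _)) /=.
    by apply/existsP; exists x; apply/existsP; exists y; rewrite xy mxy (h1 _ _ exy).
  + have /andP[mA /existsP[x /existsP[y /and3P[xy exy mxy]]]] := H21 m mM.
    rewrite (subset_trans mA (subsetUr _ _)) /=.
    by apply/existsP; exists x; apply/existsP; exists y; rewrite xy mxy (h2 _ _ exy).
- apply/forall_inP => x; rewrite inE => /orP[xA|xB].
  + have -> : [set m in M1 :|: M2 | x \in m] = [set m in M1 | x \in m].
      apply/setP => m; rewrite !inE; case mM1: (m \in M1) => //=.
      case mM2: (m \in M2) => //=; apply/negP => xm.
      have /andP[mB _] := H21 m mM2.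
      exact: dis x xA (subsetP mB x xm).
    exact: H12.
  + have -> : [set m in M1 :|: M2 | x \in m] = [set m in M2 | x \in m].
      apply/setP => m; rewrite !inE; case mM2: (m \in M2); rewrite ?orbT ?orbF //=.
      apply/negbTE/andP => [[mM1 xm]].
      have /andP[mA _] := H11 m mM1.
      exact: dis x (subsetP mA x xm) xB.
    exact: H22.
Qed.

Section Gen.
Variables (l r u : dtree V).
Hypothesis HV : hV u = hV l :|: hV r.
Hypothesis HTS : hTS u = hTS l :|: hTS r.
Hypothesis HE : forall x y, hE u x y = [|| hE l x y, hE r x y |
   ((x \in hTS l) && (y \in hTS r)) || ((y \in hTS l) && (x \in hTS r))].
Hypothesis Hdis : forall x, x \in hV l -> x \in hV r -> False.

Lemma TSl_V x : x \in hTS l -> x \in hV l.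
Proof. exact: (subsetP (hTS_sub l)). Qed.
Lemma TSr_V x : x \in hTS r -> x \in hV r.
Proof. exact: (subsetP (hTS_sub r)). Qed.

Lemma hEu_l x y : x \in hV l -> y \in hV l -> hE u x y = hE l x y.
Proof.
move=> xl yl; rewrite HE.
have Er : hE r x y = false.
  by apply/negbTE/negP => /hE_hV/andP[xr _]; exact: Hdis xl xr.
have xr : (x \in hTS r) = false by apply/negbTE/negP => /TSr_V; exact: Hdis xl.
have yr : (y \in hTS r) = false by apply/negbTE/negP => /TSr_V; exact: Hdis yl.
by rewrite Er xr yr !andbF !orbF.
Qed.

Lemma hEu_lr x y : x \in hV l -> y \in hV r -> hE u x y -> x \in hTS l.
Proof.
move=> xl yr; rewrite HE => /or3P[/hE_hV/andP[_ yl]|/hE_hV/andP[xr _]|/orP[/andP[]//|/andP[/TSl_V yl _]]].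
- by case: (Hdis yl yr).
- by case: (Hdis xl xr).
- by case: (Hdis yl yr).
Qed.

Lemma union a b Sl Sr : kfeasible l a Sl -> kfeasible r b Sr ->
  kfeasible u (a + b) (Sl :|: Sr).
Proof.
case/and3P => SlV Dl /existsP [Xl /and3P [XlS /eqP cXl pml]].
case/and3P => SrV Dr /existsP [Xr /and3P [XrS /eqP cXr pmr]].
apply/and3P; split.
- by rewrite HV setUSS.
- apply/subsetP => w; rewrite in_setD HV HTS !in_setU negb_or => /andP[/andP[nl nr] /orP[wl|wr]].
  + have : w \in cnbh l Sl by apply: (subsetP Dl); rewrite in_setD nl wl.
    rewrite !in_cnbh HV in_setU wl /= => /orP[wS|/exists_inP[s sS Es]].
      by rewrite in_setU wS.
    apply/orP; right; apply/exists_inP; exists s; first by rewrite inE sS.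
    by rewrite HE Es.
  + have : w \in cnbh r Sr by apply: (subsetP Dr); rewrite in_setD nr wr.
    rewrite !in_cnbh HV in_setU wr orbT /= => /orP[wS|/exists_inP[s sS Es]].
      by rewrite in_setU wS orbT.
    apply/orP; right; apply/exists_inP; exists s; first by rewrite inE sS orbT.
    by rewrite HE Es orbT.
- apply/existsP; exists (Xl :|: Xr); apply/and3P; split.
  + apply/subsetP => x; rewrite in_setU => /orP[/(subsetP XlS)|/(subsetP XrS)];
      rewrite !in_setI HTS !in_setU => /andP[-> ->] //; by rewrite !orbT.
  + rewrite cardsU cXl cXr.
    suff -> : Xl :&: Xr = set0 by rewrite cards0 subn0.
    apply/setP => x; rewrite !inE; apply/negbTE/andP => [[xa xb]].
    have /(subsetP XlS) := xa; rewrite in_setI => /andP[/(subsetP SlV) xl _].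
    have /(subsetP XrS) := xb; rewrite in_setI => /andP[/(subsetP SrV) xr _].
    exact: Hdis xl xr.
  + have -> : (Sl :|: Sr) :\: (Xl :|: Xr) = (Sl :\: Xl) :|: (Sr :\: Xr).
      apply/setP => x; rewrite !inE.
      case xSl: (x \in Sl); case xSr: (x \in Sr); rewrite ?andbF ?andbT ?orbF //=.
      * by case: (Hdis (subsetP SlV x xSl) (subsetP SrV x xSr)).
      * have -> : (x \in Xr) = false.
          apply/negbTE/negP => /(subsetP XrS); rewrite in_setI xSr //.
        by rewrite orbF.
      * have -> : (x \in Xl) = false.
          apply/negbTE/negP => /(subsetP XlS); rewrite in_setI xSl //.
        by [].
    apply: (pm_union _ _ _ pml pmr).
    * by move=> x y E; rewrite HE E.
    * by move=> x y E; rewrite HE E orbT.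
    * move=> x; rewrite !in_setD => /andP[_ /(subsetP SlV) xl] /andP[_ /(subsetP SrV) xr].
      exact: Hdis xl xr.
Qed.

Lemma restrict k S : kfeasible u k S ->
  exists a, a <= #|hTS l| /\ kfeasible l a (S :&: hV l).
Proof.
case/and3P => SV Dom /existsP [X /and3P [XS _ /existsP [M /andP [/forall_inP HM1 /forall_inP HM2]]]].
have TSu_l x : x \in hV l -> x \in hTS u -> x \in hTS l.
  by move=> xl; rewrite HTS in_setU => /orP[//|/TSr_V xr]; case: (Hdis xl xr).
have Vu x : x \in hV u -> x \notin hV l -> x \in hV r.
  by rewrite HV in_setU => /orP[->|].
pose Ml := [set m in M | m \subset hV l].
pose P := \bigcup_(m in Ml) m.
have MSX m : m \in M -> m \subset S :\: X by move=> mM; case/andP: (HM1 m mM).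
have PS : P \subset (S :\: X) :&: hV l.
  apply/bigcupsP => m; rewrite inE => /andP[mM ml]; by rewrite subsetI MSX.
pose Xl := S :&: hV l :\: P.
have XlTS : Xl \subset (S :&: hV l) :&: hTS l.
  apply/subsetP => x; rewrite in_setD in_setI => /andP[xP /andP[xS xl]].
  rewrite in_setI in_setI xS xl /=.
  case xX: (x \in X).
    by have := subsetP XS x xX; rewrite in_setI => /andP[_]; apply: TSu_l.
  have xSX : x \in S :\: X by rewrite in_setD xX xS.
  have /card_gt0P [m] : 0 < #|[set m in M | x \in m]| by rewrite (eqP (HM2 x xSX)).
  rewrite inE => /andP[mM xm].
  have /andP[_ /existsP [p /existsP [q /and3P [pq Epq /eqP mpq]]]] := HM1 m mM.
  have mV : m \subset hV u.
    by apply: subset_trans (MSX m mM) _; apply: subset_trans (subsetDl _ _) SV.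
  have mnl : ~~ (m \subset hV l).
    apply: contra xP => ml; apply/bigcupP; exists m => //; by rewrite inE mM ml.
  have pV : p \in hV u by apply: (subsetP mV); rewrite mpq in_set2 eqxx.
  have qV : q \in hV u by apply: (subsetP mV); rewrite mpq in_set2 eqxx orbT.
  have npq : ~~ ((p \in hV l) && (q \in hV l)).
    apply: contra mnl => /andP[pl ql]; rewrite mpq.
    by apply/subsetP => z; rewrite in_set2 => /orP[]/eqP->.
  move: xm; rewrite mpq in_set2 => /orP[]/eqP xe; subst x.
  - have ql : q \notin hV l by move: npq; rewrite xl.
    exact: hEu_lr xl (Vu _ qV ql) Epq.
  - have pl : p \notin hV l by move: npq; rewrite xl andbT.
    by apply: hEu_lr xl (Vu _ pV pl) _; rewrite hE_sym.
exists #|Xl|; split.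
  exact: subset_leq_card (subset_trans XlTS (subsetIr _ _)).
apply/and3P; split.
- exact: subsetIr.
- apply/subsetP => w; rewrite in_setD => /andP[wnt wl].
  have wnr : w \notin hTS r by apply/negP => /TSr_V; exact: Hdis wl.
  have wu : w \in hV u :\: hTS u by rewrite in_setD HV HTS !in_setU wl negb_or wnt wnr.
  move: (subsetP Dom w wu); rewrite !in_cnbh wl /= => /andP[_ /orP[wS|/exists_inP[s sS Ews]]].
    by rewrite in_setI wS wl.
  apply/orP; right; apply/exists_inP; exists s.
  have sV : s \in hV u by apply: (subsetP SV).
  case sl: (s \in hV l).
    by rewrite in_setI sS sl.
  by have := hEu_lr wl (Vu _ sV (negbT sl)) Ews; rewrite (negbTE wnt).
  have sV : s \in hV u by apply: (subsetP SV).
  case sl: (s \in hV l).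
    by rewrite -hEu_l.
  by have := hEu_lr wl (Vu _ sV (negbT sl)) Ews; rewrite (negbTE wnt).
- apply/existsP; exists Xl; rewrite XlTS eqxx /=.
  have -> : (S :&: hV l) :\: Xl = P.
    apply/setP => x; rewrite in_setD in_setD.
    case xP: (x \in P) => /=.
      by have := subsetP PS x xP; rewrite !in_setI in_setD => /andP[/andP[_ ->] ->].
    by case: (x \in S :&: hV l).
  apply/existsP; exists Ml; apply/andP; split.
  + apply/forall_inP => m; rewrite inE => /andP[mM ml].
    have mP : m \subset P by apply: bigcup_sup; rewrite inE mM ml.
    rewrite mP /=.
    have /andP[_ /existsP [p /existsP [q /and3P [pq Epq /eqP mpq]]]] := HM1 m mM.
    apply/existsP; exists p; apply/existsP; exists q; rewrite pq mpq eqxx andbT /=.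
    rewrite -hEu_l //; apply: (subsetP ml); by rewrite mpq in_set2 eqxx ?orbT.
  + apply/forall_inP => x xP.
    have xSX : x \in S :\: X by have := subsetP PS x xP; rewrite in_setI => /andP[].
    rewrite eqn_leq; apply/andP; split.
      rewrite -(eqP (HM2 x xSX)); apply: subset_leq_card.
      by apply/subsetP => m; rewrite !inE => /andP[/andP[-> _] ->].
    case/bigcupP: xP => m mMl xm.
    by apply/card_gt0P; exists m; rewrite inE mMl xm.
Qed.

End Gen.
End Aux.

Theorem lemma6 (V : finType) (G : rel V)
  (Gsym : symmetric G) (Girr : irreflexive G)
  (Gdh : distance_hereditary G)
  (T : dtree V) (HT : decomp_tree G T)
  (vl vr : dtree V) (Hv : subtree (DNode LTrue vl vr) T)
  (Pl : propP vl) (Pr : propP vr) :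
  hmin (DNode LTrue vl vr) = hmin vl + hmin vr.
Proof.
set u := DNode LTrue vl vr.
have Hun : uniq (leaves u) := subtree_uniq Hv HT.1.
have Hdis : forall x, x \in hV vl -> x \in hV vr -> False.
  move: Hun; rewrite /= cat_uniq => /and3P[_ /hasPn H _] x.
  rewrite !inE => xl xr; by move: (H x xr); rewrite xl.
have Hdis' : forall x, x \in hV vr -> x \in hV vl -> False by move=> x a b; exact: Hdis b a.
have HV : hV u = hV vl :|: hV vr := hV_node _ _ _.
have HV' : hV u = hV vr :|: hV vl by rewrite HV setUC.
have HTS : hTS u = hTS vl :|: hTS vr by [].
have HTS' : hTS u = hTS vr :|: hTS vl by rewrite HTS setUC.
have HE : forall x y, hE u x y = [|| hE vl x y, hE vr x y |
   ((x \in hTS vl) && (y \in hTS vr)) || ((y \in hTS vl) && (x \in hTS vr))] by [].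
have HE' : forall x y, hE u x y = [|| hE vr x y, hE vl x y |
   ((x \in hTS vr) && (y \in hTS vl)) || ((y \in hTS vr) && (x \in hTS vl))].
  move=> x y; rewrite HE.
  by case: (hE vl x y); case: (hE vr x y); case: (x \in hTS vl); case: (x \in hTS vr);
     case: (y \in hTS vl); case: (y \in hTS vr).
have [kl [Sl [Fl El]]] := hmin_attain vl.
have [kr [Sr [Fr Er]]] := hmin_attain vr.
have Fu := union HV HTS HE Hdis Fl Fr.
have cardU : #|Sl :|: Sr| = #|Sl| + #|Sr|.
  rewrite cardsU; suff -> : Sl :&: Sr = set0 by rewrite cards0 subn0.
  apply/setP => x; rewrite !inE; apply/negbTE/andP => [[xa xb]].
  case/and3P: Fl => /subsetP SlV _ _; case/and3P: Fr => /subsetP SrV _ _.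
  exact: Hdis (SlV x xa) (SrV x xb).
apply/eqP; rewrite eqn_leq; apply/andP; split.
  by rewrite -El -Er -cardU; apply: hmin_le Fu.
rewrite [hmin u]/hmin; apply: bigmin_ge.
  by rewrite -El -Er -cardU; apply: leqW; apply: max_card.
move=> k _; rewrite /hgamma; apply: bigmin_ge.
  by rewrite -El -Er -cardU; apply: leqW; apply: max_card.
move=> S FS.
have [a [_ Fa]] := restrict HV HTS HE Hdis FS.
have [b [_ Fb]] := restrict HV' HTS' HE' Hdis' FS.
have SV : S \subset hV u by case/and3P: FS.
have -> : #|S| = #|S :&: hV vl| + #|S :&: hV vr|.
  have SE : S = S :&: hV vl :|: S :&: hV vr.
    by rewrite -setIUr -HV; apply/esym/setIidPl.
  rewrite {1}SE cardsU; suff -> : S :&: hV vl :&: (S :&: hV vr) = set0 by rewrite cards0 subn0.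
  apply/setP => x; rewrite in_set0; apply/negbTE/negP; rewrite !in_setI.
  by case/andP => /andP[_ xl] /andP[_ xr]; exact: Hdis xl xr.
exact: leq_add (hmin_le Fa) (hmin_le Fb).
Qed.
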